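(* Consider the multi-product personalized pricing model described in the context, fix a vector $f\in\mathbb{R}^n$ with all components positive, and suppose that Assumptions A0 and A1 hold. Let $q_{\min}:=\min_{i\in N,j\in M}\bar p_{ij}/f_i$ and $q_{\max}:=\max_{i\in N,j\in M}\bar p_{ij}/f_i$. Then $$\bar{\mathcal{R}}\le \beta\,\mathcal{R}^f,\qquad \beta:=1+\ln(q_{\max}/q_{\min}).$$ Moreover, the bound is tight: for every $\rho>1$ there is an instance satisfying the hypotheses with $q_{\max}/q_{\min}=\rho$ and $\bar{\mathcal{R}}=(1+\ln\rho)\,\mathcal{R}^f$.
   Context: A firm sells products $N=\{1,\dots,n\}$ to customer types $M=\{1,\dots,m\}$. For each $i\in N$, $j\in M$, $d_{ij}:\mathbb{R}^n_{\ge 0}\to\mathbb{R}_{\ge 0}$ is the (non-negative) demand for product $i$ by type $j$ at price vector $p=(p_1,\dots,p_n)$. The profit from type $j$ is $R_j(p)=\sum_{i\in N}p_i d_{ij}(p)$ and $\mathcal{R}^*_j:=\max_{p\ge 0}R_j(p)$. Type weights $\theta_j>0$ satisfy $\sum_j\theta_j=1$. The optimal personalized profit is $\bar{\mathcal{R}}:=\sum_{j\in M}\theta_j\mathcal{R}^*_j$; the aggregate profit is $R(p):=\sum_{j}\theta_jR_j(p)$. For a positive vector $f$, $\mathcal{R}^f:=\max_{q>0}R(qf)$ (optimal profit when pricing along $f$). Assumption A0: for each $j\in M$, $R_j$ attains its maximum over $p\ge0$ at a price vector $\bar p^j=(\bar p_{1j},\dots,\bar p_{nj})$ with all components positive and finite;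 such maximizers are fixed. Define $\delta_{ij}(q):=1$ if $q\le \bar p_{ij}/f_i$ and $\delta_{ij}(q):=0$ otherwise, and for $q\ge0$ $$G(q):=\sum_{j\in M}\theta_j\sum_{i\in N}f_i d_{ij}(\bar p^j)\delta_{ij}(q),\qquad H(q):=\sum_{j\in M}\theta_j\sum_{i\in N}f_i d_{ij}(qf).$$ Assumption A1: $G(q)\le H(q)$ for all $q\ge 0$. (For the tightness claim, the paper's extremal instance has a single product, $f=e$, and a continuum of customer types with willingness to pay in $[1,\rho]$; the model is understood to allow such a continuum of types with sums over types replaced by integrals.) *)

(* Defs.v *)
From HB Require Import structures.
From mathcomp Require Import all_boot all_order all_algebra.
From mathcomp Require Import all_classical all_reals all_analysis.
Set Implicit Arguments. Unset Strict Implicit. Unset Printing Implicit Defensive.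
Import Order.TTheory GRing.Theory Num.Theory.
Import numFieldNormedType.Exports.
Local Open Scope classical_set_scope.
Local Open Scope ring_scope.

Section Common.
Variable R : realType.

Definition profit (n : nat) (dj : 'I_n -> ('I_n -> R) -> R) (p : 'I_n -> R) : R :=
  \sum_(i < n) p i * dj i p.

Definition scalev (n : nat) (q : R) (f : 'I_n -> R) : 'I_n -> R := fun i => q * f i.

Definition nonneg_vec (n : nat) (p : 'I_n -> R) : Prop := forall i, 0 <= p i.
Definition pos_vec (n : nat) (p : 'I_n -> R) : Prop := forall i, 0 < p i.

Definition ratio_set (J : Type) (n : nat) (pbar : J -> 'I_n -> R) (f : 'I_n -> R) : set R :=
  [set pbar j i / f i | j in [set: J] & i in [set: 'I_n]].
Definition qmin (J : Type) (n : nat) (pbar : J -> 'I_n -> R) (f : 'I_n -> R) : R :=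
  inf (ratio_set pbar f).
Definition qmax (J : Type) (n : nat) (pbar : J -> 'I_n -> R) (f : 'I_n -> R) : R :=
  sup (ratio_set pbar f).

Definition delta (x : R) (q : R) : R := if q <= x then 1 else 0.

Variables (n m : nat).
Implicit Types (theta : 'I_m -> R) (d : 'I_n -> 'I_m -> ('I_n -> R) -> R)
  (pbar : 'I_m -> 'I_n -> R) (f p : 'I_n -> R).

(* \bar R = sum_j theta_j R_j(pbar^j) = sum_j theta_j R^*_j  (by A0) *)
Definition Rbar_fin theta d pbar : R :=
  \sum_(j < m) theta j * profit (fun i => d i j) (pbar j).

Definition Ragg_fin theta d p : R :=
  \sum_(j < m) theta j * profit (fun i => d i j) p.

Definition Rf_fin theta d f : R :=
  sup [set Ragg_fin theta d (scalev q f) | q in [set q : R | 0 < q]].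

Definition G_fin theta d pbar f (q : R) : R :=
  \sum_(j < m) theta j * \sum_(i < n) f i * d i j (pbar j) * delta (pbar j i / f i) q.

Definition H_fin theta d f (q : R) : R :=
  \sum_(j < m) theta j * \sum_(i < n) f i * d i j (scalev q f).

Definition A0_fin d pbar : Prop :=
  forall j, pos_vec (pbar j) /\
    forall p, nonneg_vec p -> profit (fun i => d i j) p <= profit (fun i => d i j) (pbar j).

Definition A1_fin theta d pbar f : Prop :=
  forall q : R, 0 <= q -> G_fin theta d pbar f q <= H_fin theta d f q.

End Common.

Section Continuum.
Variable R : realType.
Variable n : nat.
Implicit Types (theta : probability R R) (d : 'I_n -> R -> ('I_n -> R) -> R)
  (pbar : R -> 'I_n -> R) (f p : 'I_n -> R).

Definition Rbar_c theta d pbar : R :=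
  fine (\int[theta]_t (profit (fun i => d i t) (pbar t))%:E).

Definition Ragg_c theta d p : R :=
  fine (\int[theta]_t (profit (fun i => d i t) p)%:E).

Definition Rf_c theta d f : R :=
  sup [set Ragg_c theta d (scalev q f) | q in [set q : R | 0 < q]].

Definition G_integrand d pbar f (q : R) (t : R) : R :=
  \sum_(i < n) f i * d i t (pbar t) * delta (pbar t i / f i) q.
Definition H_integrand d f (q : R) (t : R) : R :=
  \sum_(i < n) f i * d i t (scalev q f).

Definition G_c theta d pbar f (q : R) : R :=
  fine (\int[theta]_t (G_integrand d pbar f q t)%:E).
Definition H_c theta d f (q : R) : R :=
  fine (\int[theta]_t (H_integrand d f q t)%:E).

Definition continuum_instance theta d pbar f : Prop :=
  pos_vec f /\
  (forall i t p, 0 <= d i t p) /\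
  (forall t, pos_vec (pbar t) /\
         forall p, nonneg_vec p ->
           profit (fun i => d i t) p <= profit (fun i => d i t) (pbar t)) /\
  theta.-integrable setT (fun t => (profit (fun i => d i t) (pbar t))%:E) /\
      (forall q : R, 0 < q ->
         theta.-integrable setT (fun t => (profit (fun i => d i t) (scalev q f))%:E)) /\
      (forall q : R, 0 <= q ->
         theta.-integrable setT (fun t => (G_integrand d pbar f q t)%:E) /\
         theta.-integrable setT (fun t => (H_integrand d f q t)%:E)) /\
  has_ubound [set Ragg_c theta d (scalev q f) | q in [set q : R | 0 < q]] /\
  (forall q : R, 0 <= q -> G_c theta d pbar f q <= H_c theta d f q).

End Continuum.

(* Main.v *)
Require Import Defs.
From HB Require Import structures.
From mathcomp Require Import all_boot all_order all_algebra.
From mathcomp Require Import all_classical all_reals all_analysis.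
From mathcomp Require Import ring lra.
From mathcomp Require Import measurable_realfun.
Import Order.TTheory GRing.Theory Num.Theory.
Import numFieldNormedType.Exports.
Local Open Scope classical_set_scope.
Local Open Scope ring_scope.

Module Aux.
Set Implicit Arguments. Unset Strict Implicit.
Section Key.
Variable R : realType.

Lemma exists_max (K : finType) (A : {set K}) (r : K -> R) :
  (0 < #|A|)%N -> exists2 k0, k0 \in A & forall k, k \in A -> r k <= r k0.
Proof.
case/card_gt0P => k1 k1A.
case: (@arg_maxP _ _ K k1 (mem A) r k1A) => k0 k0A H.
by exists k0 => // k kA; apply: H.
Qed.

Lemma exists_min (K : finType) (A : {set K}) (r : K -> R) :
  (0 < #|A|)%N -> exists2 k0, k0 \in A & forall k, k \in A -> r k0 <= r k.
Proof.
case/card_gt0P => k1 k1A.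
case: (@arg_minP _ _ K k1 (mem A) r k1A) => k0 k0A H.
by exists k0 => // k kA; apply: H.
Qed.

Lemma one_sub_le_ln (M r0 : R) : 0 < r0 -> r0 <= M -> 1 - r0 / M <= ln (M / r0).
Proof.
move=> r0p r0M.
have Mp : 0 < M by apply: lt_le_trans r0M.
have y0 : 0 < r0 / M by apply: divr_gt0.
have H : ln (r0 / M) <= r0 / M - 1.
  have := @le_ln1Dx R (r0 / M - 1).
  rewrite addrCA subrr addr0; apply; lra.
have -> : M / r0 = (r0 / M)^-1 by rewrite invf_div.
rewrite lnV ?posrE //; lra.
Qed.

Lemma key (K : finType) (w r : K -> R) (a C : R) : 0 < a -> 0 <= C ->
  (forall k, 0 <= w k) ->
  forall (A : {set K}) (T0 M : R), 0 <= T0 ->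
  (forall k, k \in A -> a <= r k <= M) -> a <= M -> M * T0 <= C ->
  (forall k, k \in A -> r k * (T0 + \sum_(l in A | r k <= r l) w l) <= C) ->
  T0 * M + \sum_(k in A) w k * r k <= C * (1 + ln (M / a)).
Proof.
move=> ap C0 w0 A.
have [n] : exists n, #|A| = n by exists #|A|.
elim: n A => [|n IH] A cA T0 M T00 rA aM MT0 cond.
  move/eqP: cA; rewrite cards_eq0 => /eqP ->; rewrite big_set0 addr0.
  have Mp : 0 < M by apply: lt_le_trans aM.
  have : 0 <= ln (M / a) by rewrite ln_ge0 // ler_pdivlMr // mul1r.
  nra.
have An : (0 < #|A|)%N by rewrite cA.
case: (exists_max r An) => k0 k0A k0max.
set r0 := r k0.
have /andP [ar0 r0M] := rA k0 k0A.
have r0p : 0 < r0 by apply: lt_le_trans ar0.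
have Mp : 0 < M by apply: lt_le_trans r0M.
set A' := A :\ k0.
have cA' : #|A'| = n by rewrite /A' (cardsD1 k0 A) k0A in cA; case: cA.
have split_cond : forall k, k \in A -> r k <= r0 ->
   \sum_(l in A | r k <= r l) w l = w k0 + \sum_(l in A' | r k <= r l) w l.
  move=> k kA rk.
  rewrite (bigD1 k0) /=; last by rewrite k0A rk.
  congr (_ + _); apply: eq_bigl => l; rewrite /A' in_setD1.
  by case: (l == k0); rewrite ?andbF ?andbT //= andbT.
have c0 := cond k0 k0A.
rewrite split_cond // in c0.
have sA'ge0 : 0 <= \sum_(l in A' | r0 <= r l) w l by apply: sumr_ge0 => l _.
have H1 : r0 * (T0 + w k0) <= C.
  apply: le_trans c0; rewrite ler_pM2l //; have := w0 k0; lra.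
have IH' := IH A' cA' (T0 + w k0) r0.
have := IH' (addr_ge0 T00 (w0 k0)).
have HA' : forall k, k \in A' -> a <= r k <= r0.
  move=> k; rewrite /A' in_setD1 => /andP [_ kA].
  by have /andP [-> _] := rA k kA; rewrite k0max.
move/(_ HA' ar0 H1).
have cond' : forall k, k \in A' -> r k * (T0 + w k0 + \sum_(l in A' | r k <= r l) w l) <= C.
  move=> k; rewrite /A' in_setD1 => /andP [_ kA].
  by rewrite -addrA -split_cond //; [apply: cond | apply: k0max].
move/(_ cond') => IHres.
rewrite (big_setD1 k0) //= -/A' -/r0.
have lnsplit : ln (M / a) = ln (M / r0) + ln (r0 / a).
  rewrite -lnM ?posrE ?divr_gt0 //; congr ln; field.
  by apply/andP; split; apply: lt0r_neq0.
have L := one_sub_le_ln r0p r0M.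
have E1 : T0 * (M - r0) <= C * (1 - r0 / M).
  have -> : T0 * (M - r0) = (M * T0) * (1 - r0 / M).
    by field; apply: lt0r_neq0.
  apply: ler_wpM2r => //.
  by rewrite subr_ge0 ler_pdivrMr // mul1r.
have E2 : C * (1 - r0 / M) <= C * ln (M / r0) by apply: ler_wpM2l.
rewrite lnsplit.
have : T0 * M + (w k0 * r0 + \sum_(i in A') w i * r i)
  = T0 * (M - r0) + ((T0 + w k0) * r0 + \sum_(k in A') w k * r k) by ring.
move=> ->.
nra.
Qed.

Lemma part1 (n m : nat) (theta : 'I_m -> R) (d : 'I_n -> 'I_m -> ('I_n -> R) -> R)
          (pbar : 'I_m -> 'I_n -> R) (f : 'I_n -> R) :
      (forall j, 0 < theta j) -> \sum_(j < m) theta j = 1 ->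
      (forall i j p, 0 <= d i j p) ->
      pos_vec f ->
      A0_fin d pbar ->
      A1_fin theta d pbar f ->
      Rbar_fin theta d pbar
        <= (1 + ln (qmax pbar f / qmin pbar f)) * Rf_fin theta d f.
Proof.
move=> thp th1 dp fp A0 A1.
set S := [set Ragg_fin theta d (scalev q f) | q in [set q : R | 0 < q]].
have ubS : has_ubound S.
  exists (Rbar_fin theta d pbar) => z [q q0 <-].
  apply: ler_sum => j _; apply: ler_wpM2l; first exact: ltW.
  case: (A0 j) => _; apply => i; rewrite /scalev; apply: mulr_ge0; first exact: ltW.
  exact: ltW.
have Rle : forall q, 0 < q -> Ragg_fin theta d (scalev q f) <= Rf_fin theta d f.
  by move=> q q0; apply: ub_le_sup => //; exists q.
have C0 : 0 <= Rf_fin theta d f.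
  apply: le_trans (Rle 1 ltr01).
  apply: sumr_ge0 => j _; apply: mulr_ge0; first exact: ltW.
  apply: sumr_ge0 => i _; apply: mulr_ge0 => //.
  by rewrite /scalev mul1r; apply: ltW.
case: (posnP n) => [n0|npos].
  subst n.
  have -> : Rbar_fin theta d pbar = 0.
    by rewrite /Rbar_fin big1 // => j _; rewrite /profit big_ord0 mulr0.
  have E : ratio_set pbar f = set0.
    apply/seteqP; split => z //= [j _ [[i hi] _ _]].
    by rewrite ltn0 in hi.
  by rewrite /qmax /qmin E sup0 inf0 mul0r ln0 // addr0 mul1r.
case: (posnP m) => [m0|mpos].
  by subst m; move: th1; rewrite big_ord0 => /eqP; rewrite eq_sym oner_eq0.
pose K := ('I_m * 'I_n)%type.
pose w (p : K) := theta p.1 * (f p.2 * d p.2 p.1 (pbar p.1)).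
pose r (p : K) := pbar p.1 p.2 / f p.2.
have Kne : (0 < #|[set: K]%SET|)%N.
  apply/card_gt0P; exists (Ordinal mpos, Ordinal npos); by rewrite !inE.
have rpos : forall k, 0 < r k.
  by move=> [j i]; rewrite /r divr_gt0 //; case: (A0 j) => P _; apply: P.
have w0 : forall k, 0 <= w k.
  move=> [j i]; rewrite /w mulr_ge0 ?mulr_ge0 //; apply: ltW => //; exact: fp.
have inS : forall k, ratio_set pbar f (r k).
  by move=> [j i]; exists j => //; exists i.
case: (exists_min r Kne) => kmin _ kminP.
have lbS : lbound (ratio_set pbar f) (r kmin).
  by move=> z [j _ [i _ <-]]; apply: (kminP (j, i)); rewrite finset.in_setT.
have rne : ratio_set pbar f !=set0 by exists (r kmin).
have aP : 0 < qmin pbar f.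
  by apply: lt_le_trans (rpos kmin) _; apply: lb_le_inf.
have ar : forall k, qmin pbar f <= r k.
  move=> k; apply: ge_inf (inS k); by exists (r kmin).
case: (exists_max r Kne) => kmax _ kmaxP.
have ubR : has_ubound (ratio_set pbar f).
  by exists (r kmax) => z [j _ [i _ <-]]; apply: (kmaxP (j, i)); rewrite finset.in_setT.
have rM : forall k, r k <= qmax pbar f.
  by move=> k; apply: ub_le_sup (inS k).
have G_eq : forall q, G_fin theta d pbar f q = \sum_(l in [set: K]%SET | q <= r l) w l.
  move=> q; rewrite /G_fin.
  under eq_bigr do rewrite mulr_sumr.
  rewrite pair_bigA [RHS]big_mkcond /=; apply: eq_bigr => [[j i]] _ /=.
  idtac.
  rewrite finset.in_setT /delta /w /r /=; case: ifP => _; ring.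
have H_eq : forall q, q * H_fin theta d f q = Ragg_fin theta d (scalev q f).
  move=> q; rewrite /H_fin /Ragg_fin /profit mulr_sumr; apply: eq_bigr => j _.
  rewrite mulrCA; congr (_ * _); rewrite mulr_sumr; apply: eq_bigr => i _.
  rewrite /scalev; ring.
have := @key K w r (qmin pbar f) (Rf_fin theta d f) aP C0 w0 [set: K]%SET 0 (qmax pbar f)
  (lexx 0).
have rA : forall k, k \in [set: K]%SET -> qmin pbar f <= r k <= qmax pbar f.
  by move=> k _; rewrite ar rM.
move/(_ rA (le_trans (ar kmin) (rM kmin))).
rewrite mulr0 => /(_ C0).
have cond : forall k, k \in [set: K]%SET ->
   r k * (0 + \sum_(l in [set: K]%SET | r k <= r l) w l) <= Rf_fin theta d f.
  move=> k _; rewrite add0r -G_eq.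
  apply: le_trans (Rle _ (rpos k)); rewrite -H_eq.
  apply: ler_wpM2l; first exact: ltW.
  by apply: A1; apply: ltW.
move/(_ cond); rewrite mul0r add0r mulrC.
suff -> : Rbar_fin theta d pbar = \sum_(k in [set: K]%SET) w k * r k by [].
rewrite /Rbar_fin /profit.
under eq_bigr do rewrite mulr_sumr.
rewrite pair_bigA /=; apply: eq_big => [[j i]|[j i] _] /=; first by rewrite finset.in_setT.
rewrite /w /r /=; field.
by apply: lt0r_neq0; apply: fp.
Qed.
End Key.

Section P2.
Variable R : realType.
Variable rho : R.
Hypothesis rho1 : 1 < rho.

Definition gg (t : R) : R := Num.max rho^-1 (Num.min 1 `|t|).
Definition vv (t : R) : R := (gg t)^-1.

Lemma rho0 : 0 < rho. Proof. by apply: lt_trans rho1. Qed.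
Lemma rhoV1 : rho^-1 < 1. Proof. by rewrite invf_lt1 // rho0. Qed.
Lemma rhoV0 : 0 < rho^-1. Proof. by rewrite invr_gt0 rho0. Qed.

Lemma gg_ge t : rho^-1 <= gg t. Proof. by rewrite /gg le_max lexx. Qed.
Lemma gg_le1 t : gg t <= 1.
Proof. by rewrite /gg ge_max (ltW rhoV1) ge_min lexx. Qed.
Lemma gg_gt0 t : 0 < gg t. Proof. exact: lt_le_trans rhoV0 (gg_ge t). Qed.

Lemma vv_ge1 t : 1 <= vv t.
Proof. by rewrite /vv invf_ge1 ?gg_gt0 // gg_le1. Qed.
Lemma vv_le t : vv t <= rho.
Proof.
rewrite /vv -[X in _ <= X]invrK lef_pV2 ?posrE ?gg_gt0 ?rhoV0 //; exact: gg_ge.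
Qed.
Lemma vv_gt0 t : 0 < vv t. Proof. exact: lt_le_trans ltr01 (vv_ge1 t). Qed.

Lemma vv_small t : `|t| <= rho^-1 -> vv t = rho.
Proof.
move=> h; rewrite /vv /gg.
have -> : Num.max rho^-1 (Num.min 1 `|t|) = rho^-1.
  apply/max_idPl; rewrite ge_min; apply/orP; right; exact: h.
by rewrite invrK.
Qed.

Lemma vv_mid t : rho^-1 <= `|t| -> `|t| <= 1 -> vv t = `|t|^-1.
Proof.
move=> h1 h2; rewrite /vv /gg.
have -> : Num.min 1 `|t| = `|t| by apply/min_idPr.
by have -> : Num.max rho^-1 `|t| = `|t| by apply/max_idPr.
Qed.

Lemma vv_ge_q q t : 1 < q -> q <= vv t -> `|t| <= q^-1.
Proof.
move=> q1 qv.
have q0 : 0 < q by apply: lt_trans q1.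
have : gg t <= q^-1.
  by rewrite -[gg t]invrK lef_pV2 ?posrE ?invr_gt0 ?gg_gt0.
rewrite /gg ge_max => /andP [_]; rewrite ge_min => /orP [|//].
move=> h; exfalso; have : q^-1 < 1 by rewrite invf_lt1.
by rewrite ltNge h.
Qed.

Lemma gg_cont : continuous gg.
Proof.
move=> x; apply: (@continuous_max R R (fun=> rho^-1) (fun t => Num.min 1 `|t|)).
  exact: cvg_cst.
apply: (@continuous_min R R (fun=> 1) (fun t => `|t|)); first exact: cvg_cst.
exact: norm_continuous.
Qed.

Lemma vv_cont : continuous vv.
Proof.
move=> x; apply: continuousV; first by rewrite gt_eqF // gg_gt0.
exact: gg_cont.
Qed.

Lemma vv_meas : measurable_fun setT vv.
Proof. exact: continuous_measurable_fun vv_cont. Qed.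

Local Notation mu := (@lebesgue_measure R).

Lemma ftc_inv (a b : R) : 0 < a -> a < b ->
  (\int[mu]_(x in `[a, b]) (x^-1)%:E = (ln b)%:E - (ln a)%:E)%E.
Proof.
move=> a0 ab.
apply: (@continuous_FTC2 R (fun x => x^-1) (@ln R) a b ab).
- apply: continuous_in_subspaceT => x; rewrite inE /= in_itv /= => /andP [ax _].
  by apply: inv_continuous; rewrite gt_eqF // (lt_le_trans a0 ax).
- split.
  + move=> x; rewrite in_itv /= => /andP [ax _].
    by apply: ex_derive; apply: is_derive1_ln; apply: lt_trans ax.
  + by apply: cvg_at_right_filter; apply: continuous_ln.
  + by apply: cvg_at_left_filter; apply: continuous_ln; apply: lt_trans ab.
- move=> x; rewrite in_itv /= => /andP [ax _].
  have x0 : 0 < x by apply: lt_trans ax.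
  by rewrite derive1E; have [_ ->] := is_derive1_ln x0.
Qed.

Let idTR : measurableTypeR R -> R := idfun.
#[local] HB.instance Definition _ :=
  @isMeasurableFun.Build _ _ _ _ idTR (@measurable_id _ _ setT).
Definition UU := uniform_prob (@ltr01 R).
Definition th : probability R R := distribution UU (idTR : {RV UU >-> R}).

Lemma int_th (g : R -> \bar R) : measurable_fun [set: R] g -> (forall x, (0 <= g x)%E) ->
  (\int[th]_x g x = \int[mu]_(x in `[0%R, 1%R]) g x)%E.
Proof.
move=> mg g0; rewrite /th ge0_integral_distribution //.
rewrite /UU integral_uniform //= ?subr0 ?invr1 ?mul1e //.
Qed.

Lemma int_vv : (\int[th]_t (vv t)%:E = (1 + ln rho)%:E)%E.
Proof.
rewrite int_th; last 2 first.
- by apply/measurable_EFinP; exact: vv_meas.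
- by move=> x; rewrite lee_fin ltW // vv_gt0.
rewrite (@itv_bndbnd_setU _ _ (BLeft 0) (BLeft rho^-1) (BRight 1)); last 2 first.
- by rewrite bnd_simp ltW // rhoV0.
- by rewrite bnd_simp ltW // rhoV1.
rewrite ge0_integral_setU //=; last 3 first.
- by apply/measurable_EFinP; apply: measurable_funTS; exact: vv_meas.
- by move=> x _; rewrite lee_fin ltW // vv_gt0.
- apply: lt_disjoint => x y; rewrite !in_itv /= => /andP [_ xr] /andP [ry _].
  exact: lt_le_trans xr ry.
rewrite (@eq_integral _ _ _ mu `[0, rho^-1[ (fun=> rho%:E)); last first.
  move=> x; rewrite inE /= in_itv /= => /andP [x0 xr].
  by rewrite vv_small // ger0_norm // ltW.
rewrite (@eq_integral _ _ _ mu `[rho^-1, 1] (fun x => (x^-1)%:E)); last first.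
  move=> x; rewrite inE /= in_itv /= => /andP [rx x1].
  have x0 : 0 <= x by apply: le_trans _ rx; apply: ltW; exact: rhoV0.
  by rewrite vv_mid ?ger0_norm.
rewrite integral_cst //= lebesgue_measure_itv /= lte_fin rhoV0.
rewrite ftc_inv ?rhoV0 ?rhoV1 // ln1 lnV ?posrE ?rho0 //.
rewrite -?EFinN -?EFinD -?EFinB -?EFinM -?EFinD -?EFinB; congr EFin.
rewrite oppr0 addr0 mulfV ?gt_eqF ?rho0 //; lra.
Qed.

Definition fI : 'I_1 -> R := fun=> 1.
Definition dI : 'I_1 -> R -> ('I_1 -> R) -> R :=
  fun i t p => if p i <= vv t then 1 else 0.
Definition pI : R -> 'I_1 -> R := fun t _ => vv t.
Definition ind (q t : R) : R := if q <= vv t then 1 else 0.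

Lemma ind_meas q : measurable_fun setT (ind q).
Proof.
rewrite /ind.
apply: (@measurable_fun_ifT _ _ R R (fun=> 1) (fun=> 0) (fun t => q <= vv t)).
- exact: (measurable_fun_ler (measurable_cst q) vv_meas).
- exact: measurable_cst.
- exact: measurable_cst.
Qed.

Lemma ind_ge0 q t : 0 <= ind q t.
Proof. by rewrite /ind; case: ifP. Qed.
Lemma ind_le1 q t : ind q t <= 1.
Proof. by rewrite /ind; case: ifP. Qed.

Lemma prof_p t : profit (fun i => dI i t) (pI t) = vv t.
Proof. by rewrite /profit big_ord1 /dI /pI lexx mulr1. Qed.

Lemma prof_q q t : profit (fun i => dI i t) (scalev q fI) = q * ind q t.
Proof. by rewrite /profit big_ord1 /dI /scalev /fI /ind mulr1. Qed.

Lemma G_int q t : G_integrand dI pI fI q t = ind q t.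
Proof.
by rewrite /G_integrand big_ord1 /dI /pI /fI lexx !mul1r /delta divr1.
Qed.

Lemma H_int q t : H_integrand dI fI q t = ind q t.
Proof. by rewrite /H_integrand big_ord1 /dI /fI /scalev mulr1 mul1r. Qed.

Lemma th_fin : (th setT < +oo)%E.
Proof. by rewrite probability_setT ltry. Qed.

Lemma int_bdd (g : R -> R) (B : R) : measurable_fun setT g ->
  (forall x, `|g x| <= B) -> th.-integrable setT (EFin \o g).
Proof.
move=> mg gB; apply: measurable_bounded_integrable => //; first exact: th_fin.
exists B; split; first exact: num_real.
move=> M BM x _ /=; apply: le_trans (gB x) _; exact: ltW.
Qed.

Lemma Ragg_le1 q : 0 < q -> Ragg_c th dI (scalev q fI) <= 1.
Proof.
move=> q0.
rewrite /Ragg_c.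
have -> : (fun t => (profit (fun i => dI i t) (scalev q fI))%:E) =
          (fun t => (q * ind q t)%:E) by apply/funext => t; rewrite prof_q.
have mh : measurable_fun setT (fun t => (q * ind q t)%:E).
  by apply/measurable_EFinP; apply: measurable_funM => //; exact: ind_meas.
have h0 : forall t, (0 <= (q * ind q t)%:E)%E.
  by move=> t; rewrite lee_fin mulr_ge0 ?ind_ge0 // ltW.
rewrite int_th //.
set e := (\int[mu]_(x in _) _)%E.
suff : (e <= 1)%E.
  move=> e1; have e0 : (0 <= e)%E by apply: integral_ge0 => t _; exact: h0.
  have ef : e \is a fin_num by rewrite ge0_fin_numE //; apply: le_lt_trans e1 _; exact: ltry.
  by rewrite -(fineK ef) lee_fin in e1.
rewrite /e.
case: (lerP q 1) => q1.
  apply: (@le_trans _ _ (\int[mu]_(x in `[0%R, 1%R]) (cst 1%E) x)%E).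
    apply: (ge0_le_integral mu (measurable_itv _) (fun t _ => h0 t)
      (measurable_funTS mh) (measurable_cst _)) => t tD /=.
    rewrite lee_fin; have := ind_le1 q t; have := ind_ge0 q t; nra.
  by rewrite integral_cst //= lebesgue_measure_itv /= lte01 oppr0 adde0 mul1e.
rewrite (@itv_bndbnd_setU _ _ (BLeft 0) (BRight q^-1) (BRight 1)); last 2 first.
- by rewrite bnd_simp invr_ge0 ltW.
- by rewrite bnd_simp invf_le1 // ltW.
rewrite ge0_integral_setU //=; last 2 first.
- apply/measurable_EFinP; apply: measurable_funTS; apply: measurable_funM => //; exact: ind_meas.
- apply: lt_disjoint => x y; rewrite !in_itv /= => /andP [_ xr] /andP [ry _].
  exact: le_lt_trans xr ry.
rewrite (@eq_integral _ _ _ mu `]q^-1, 1] (fun=> 0%E)); last first.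
  move=> x; rewrite inE /= in_itv /= => /andP [qx x1].
  rewrite /ind; case: ifP => qv; last by rewrite mulr0.
  have := vv_ge_q q1 qv; rewrite ger0_norm; last first.
    by apply: le_trans (ltW qx); rewrite invr_ge0 ltW.
  by rewrite leNgt qx.
rewrite integral0 adde0.
apply: (@le_trans _ _ (\int[mu]_(x in `[0%R, q^-1%R]) (cst q%:E) x)%E).
  apply: (ge0_le_integral mu (measurable_itv _) (fun t _ => h0 t)
    (measurable_funTS mh) (measurable_cst _)) => t tD /=.
  rewrite lee_fin; have := ind_le1 q t; have := ind_ge0 q t; nra.
rewrite integral_cst //= lebesgue_measure_itv /= lte_fin invr_gt0 q0 oppr0 adde0.
by rewrite -EFinM mulfV ?gt_eqF.
Qed.

Lemma Ragg_1 : Ragg_c th dI (scalev 1 fI) = 1.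
Proof.
rewrite /Ragg_c.
have -> : (fun t => (profit (fun i => dI i t) (scalev 1 fI))%:E) =
          (fun t => cst 1%E t).
  apply/funext => t; rewrite prof_q /ind vv_ge1 mulr1 //.
rewrite integral_cst // [X in (1 * X)%E](_ : _ = 1%E) ?mul1e //; exact: probability_setT.
Qed.

Lemma Rf_1 : Rf_c th dI fI = 1.
Proof.
rewrite /Rf_c; apply/eqP; rewrite eq_le; apply/andP; split.
  apply: ge_sup; first by exists 1, 1 => //=; rewrite Ragg_1.
  by move=> z [q q0 <-]; exact: Ragg_le1.
apply: ub_le_sup.
  by exists 1 => z [q q0 <-]; exact: Ragg_le1.
by exists 1 => //=; rewrite ?Ragg_1.
Qed.


Lemma ratio_mem z : ratio_set pI fI z <-> exists t, z = vv t.
Proof.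
split.
  by move=> [t _ [i _ <-]]; exists t; rewrite /pI /fI divr1.
by move=> [t ->]; exists t => //; exists ord0 => //; rewrite /pI /fI divr1.
Qed.

Lemma qmax_rho : qmax pI fI = rho.
Proof.
have ub : ubound (ratio_set pI fI) rho.
  by move=> z /ratio_mem [t ->]; exact: vv_le.
have mem : ratio_set pI fI rho.
  apply/ratio_mem; exists 0; rewrite vv_small // normr0 ltW //; exact: rhoV0.
apply/eqP; rewrite eq_le; apply/andP; split.
  by apply: ge_sup => //; exists rho.
by apply: ub_le_sup => //; exists rho.
Qed.

Lemma qmin_1 : qmin pI fI = 1.
Proof.
have lb : lbound (ratio_set pI fI) 1.
  by move=> z /ratio_mem [t ->]; exact: vv_ge1.
have mem : ratio_set pI fI 1.
  apply/ratio_mem; exists 1; rewrite vv_mid ?normr1 ?invr1 //; exact: ltW rhoV1.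
apply/eqP; rewrite eq_le; apply/andP; split.
  by apply: ge_inf => //; exists 1.
by apply: lb_le_inf => //; exists 1.
Qed.

Lemma tight : exists (n : nat) (theta : probability R R) (d : 'I_n -> R -> ('I_n -> R) -> R)
            (pbar : R -> 'I_n -> R) (f : 'I_n -> R),
       [/\ continuum_instance theta d pbar f,
           qmax pbar f / qmin pbar f = rho,
           0 < Rbar_c theta d pbar &
           Rbar_c theta d pbar = (1 + ln rho) * Rf_c theta d f].
Proof.
have RbarE : Rbar_c th dI pI = 1 + ln rho.
  rewrite /Rbar_c.
  have -> : (fun t => (profit (fun i => dI i t) (pI t))%:E) = (fun t => (vv t)%:E).
    by apply/funext => t; rewrite prof_p.
  by rewrite int_vv.
exists 1%N, th, dI, pI, fI; split.
- split; first by move=> i; exact: ltr01.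
  split; first by move=> i t p; rewrite /dI; case: ifP.
  split.
    move=> t; split; first by move=> i; exact: vv_gt0.
    move=> p _; rewrite prof_p /profit big_ord1 /dI; case: ifP => h.
      by rewrite mulr1.
    by rewrite mulr0; apply: ltW; exact: vv_gt0.
  split.
    have -> : (fun t => (profit (fun i => dI i t) (pI t))%:E) = EFin \o vv.
      by apply/funext => t; rewrite /= prof_p.
    apply: (@int_bdd _ rho vv_meas) => t; rewrite ger0_norm ?vv_le //.
    by apply: ltW; exact: vv_gt0.
  split.
    move=> q q0.
    have -> : (fun t => (profit (fun i => dI i t) (scalev q fI))%:E) =
              EFin \o (fun t => q * ind q t).
      by apply/funext => t; rewrite /= prof_q.
    apply: (@int_bdd _ q).
      by apply: measurable_funM => //; exact: ind_meas.
    move=> t; rewrite normrM (ger0_norm (ltW q0)) ger0_norm ?ind_ge0 //.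
    have := ind_le1 q t; have := ind_ge0 q t; nra.
  split.
    move=> q q0; split.
      have -> : (fun t => (G_integrand dI pI fI q t)%:E) = EFin \o ind q.
        by apply/funext => t; rewrite /= G_int.
      by apply: (@int_bdd _ 1 (ind_meas q)) => t; rewrite ger0_norm ?ind_ge0 ?ind_le1.
    have -> : (fun t => (H_integrand dI fI q t)%:E) = EFin \o ind q.
      by apply/funext => t; rewrite /= H_int.
    by apply: (@int_bdd _ 1 (ind_meas q)) => t; rewrite ger0_norm ?ind_ge0 ?ind_le1.
  split.
    by exists 1 => z [q q0 <-]; exact: Ragg_le1.
  move=> q _; rewrite /G_c /H_c.
  have -> : (fun t => (G_integrand dI pI fI q t)%:E) =
            (fun t => (H_integrand dI fI q t)%:E).
    by apply/funext => t; rewrite G_int H_int.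
  exact: lexx.
- by rewrite qmax_rho qmin_1 divr1.
- by rewrite RbarE; apply: addr_gt0 => //; apply: ln_gt0.
- by rewrite RbarE Rf_1 mulr1.
Qed.

End P2.

End Aux.

Theorem theorem1 (R : realType) :
  (* the bound, for finitely many products n and customer types m *)
  (forall (n m : nat) (theta : 'I_m -> R) (d : 'I_n -> 'I_m -> ('I_n -> R) -> R)
          (pbar : 'I_m -> 'I_n -> R) (f : 'I_n -> R),
      (forall j, 0 < theta j) -> \sum_(j < m) theta j = 1 ->
      (forall i j p, 0 <= d i j p) ->
      pos_vec f ->
      A0_fin d pbar ->
      A1_fin theta d pbar f ->
      Rbar_fin theta d pbar
        <= (1 + ln (qmax pbar f / qmin pbar f)) * Rf_fin theta d f)
  /\
  (* tightness, with a continuum of customer types *)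
  (forall rho : R, 1 < rho ->
     exists (n : nat) (theta : probability R R) (d : 'I_n -> R -> ('I_n -> R) -> R)
            (pbar : R -> 'I_n -> R) (f : 'I_n -> R),
       [/\ continuum_instance theta d pbar f,
           qmax pbar f / qmin pbar f = rho,
           0 < Rbar_c theta d pbar &
           Rbar_c theta d pbar = (1 + ln rho) * Rf_c theta d f]).
Proof.
split.
- by move=> n m theta d pbar f; exact: Aux.part1.
- by move=> rho rho1; exact: (Aux.tight rho1).
Qed.
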